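(* Let $I\times J$ be a dyadic square and let $G_{i,j}$, $1\leq i\leq m$, $1\leq j\leq n$, be nonnegative bounded measurable functions on $I\times J$. Then $$\Big[\prod_{\substack{1\leq i\leq m\\1\leq j\leq n}}G_{i,j}(x_i,y_j)\Big]_{x_1,\ldots,x_m\in I,\ y_1,\ldots,y_n\in J}\leq\prod_{\substack{1\leq i\leq m\\1\leq j\leq n}}\big[G_{i,j}^{\max\{m,n\}}\big]_{I\times J}^{1/\max\{m,n\}}.$$
   Context: $[\cdot]_{x_1,\ldots,x_m\in I,\,y_1,\ldots,y_n\in J}$ denotes the average $\frac{1}{|I|^m|J|^n}\int_{I^m\times J^n}(\cdot)$, and $[G]_{I\times J}$ denotes the average of $G$ over the square $I\times J$. *)

(* Defs.v *)
From HB Require Import structures.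
From mathcomp Require Import all_boot all_order all_algebra.
From mathcomp Require Import all_classical all_reals all_analysis.
Set Implicit Arguments. Unset Strict Implicit. Unset Printing Implicit Defensive.
Import Order.TTheory GRing.Theory Num.Theory.
Import numFieldNormedType.Exports.
Local Open Scope classical_set_scope.
Local Open Scope ring_scope.

Definition dyadic_interval {R : realType} (k l : int) : set R :=
  [set x : R | k%:~R * (2%:R ^ l) <= x < (k + 1)%:~R * (2%:R ^ l)].

(* Iterated integral over A^k of F (variables x 0, ..., x (k-1));
   by Tonelli, for nonnegative measurable F this is the integral of F
   over A^k with respect to k-dimensional Lebesgue measure. *)
Fixpoint iter_int {R : realType} (A : set R) (k : nat)
    (F : (nat -> R) -> \bar R) : \bar R :=
  match k with
  | 0 => F (fun _ => 0)
  | k'.+1 => (\int[@lebesgue_measure R]_(t in A)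
                iter_int A k' (fun x => F (fun i => if i == k' then t else x i)))%E
  end.

(* Main.v *)
Require Import Defs.
From HB Require Import structures.
From mathcomp Require Import all_boot all_order all_algebra.
From mathcomp Require Import all_classical all_reals all_analysis.
From mathcomp Require Import measurable_realfun.
From mathcomp Require Import ring lra.
Import Order.TTheory GRing.Theory Num.Theory.
Import numFieldNormedType.Exports.
Local Open Scope classical_set_scope.
Local Open Scope ring_scope.
Section Lib.
Variable R : realType.
Local Notation mu := (@lebesgue_measure R).
Lemma le_int_ge0 (D : set R) (f g : R -> \bar R) :
  (forall x, D x -> (0 <= f x)%E) -> (forall x, D x -> (f x <= g x)%E) ->
  (\int[mu]_(x in D) f x <= \int[mu]_(x in D) g x)%E.
Proof.
move=> f0 fg.
have g0 x : D x -> (0 <= g x)%E by move=> Dx; exact: le_trans (f0 _ Dx) (fg _ Dx).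
rewrite !ge0_integralE//.
apply: ereal_sup_le => _ [h /= hf <-]; exists h => //= x.
apply: le_trans (hf x) _.
rewrite /patch; case: ifP => // /[1!inE] Dx; exact: fg.
Qed.

Lemma iter_int_eq (A : set R) k (F F' : (nat -> R) -> \bar R) :
  (forall x, (forall i, (i < k)%N -> A (x i)) -> F x = F' x) ->
  iter_int A k F = iter_int A k F'.
Proof.
elim: k F F' => [|k IH] F F' H /=; first by apply: H.
apply: eq_integral => t /[1!inE] At; apply: IH => x Hx; apply: H => i.
case: eqP => [//|/eqP ik]; rewrite ltnS leq_eqVlt (negbTE ik) /=; exact: Hx.
Qed.

Lemma iter_int_ge0 (A : set R) k (F : (nat -> R) -> \bar R) :
  (forall x, (forall i, (i < k)%N -> A (x i)) -> (0 <= F x)%E) ->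
  (0 <= iter_int A k F)%E.
Proof.
elim: k F => [|k IH] F H /=; first by apply: H.
apply: integral_ge0 => t At; apply: IH => x Hx; apply: H => i.
case: eqP => [//|/eqP ik]; rewrite ltnS leq_eqVlt (negbTE ik) /=; exact: Hx.
Qed.

Lemma iter_int_le (A : set R) k (F F' : (nat -> R) -> \bar R) :
  (forall x, (forall i, (i < k)%N -> A (x i)) -> (0 <= F x)%E /\ (F x <= F' x)%E) ->
  (iter_int A k F <= iter_int A k F')%E.
Proof.
elim: k F F' => [|k IH] F F' H /=; first by apply: (H _ _).2.
have H' t : A t -> forall x, (forall i, (i < k)%N -> A (x i)) ->
   forall i, (i < k.+1)%N -> A (if i == k then t else x i).
  move=> At x Hx i; case: eqP => [//|/eqP ik]; rewrite ltnS leq_eqVlt (negbTE ik) /=; exact: Hx.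
apply: le_int_ge0 => t At.
  by apply: iter_int_ge0 => x Hx; apply: (H _ (H' t At x Hx)).1.
by apply: IH => x Hx; apply: H; apply: H'.
Qed.
Lemma iter_int_sep (A : set R) (mA : measurable A) (S : nat) (c : 'I_S -> R)
  (f : 'I_S -> nat -> R -> R) (v : 'I_S -> nat -> R) k :
  (forall s, 0 <= c s) ->
  (forall s i, measurable_fun A (f s i)) ->
  (forall s i t, A t -> 0 <= f s i t) ->
  (forall s i, (\int[mu]_(t in A) (f s i t)%:E = (v s i)%:E)%E) ->
  iter_int A k (fun x => (\sum_s c s * \prod_(i < k) f s i (x i))%:E) =
  (\sum_s c s * \prod_(i < k) v s i)%:E.
Proof.
move=> + mf f0 fv.
have v0 s i : 0 <= v s i.
  by rewrite -lee_fin -fv; apply: integral_ge0 => t At; rewrite lee_fin f0.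
elim: k c => [|k IH] c c0 /=.
  by congr (_%:E); apply: eq_bigr => s _; rewrite !big_ord0.
transitivity (\int[mu]_(t in A)
   (\sum_s (c s * \prod_(i < k) v s i) * f s k t)%:E)%E.
  apply: eq_integral => t /[1!inE] At.
  rewrite (_ : (fun x => _) = (fun x : nat -> R =>
     (\sum_s (c s * f s k t) * \prod_(i < k) f s i (x i))%:E)); last first.
    apply/funext => x; congr (_%:E); apply: eq_bigr => s _.
    rewrite big_ord_recr /= eqxx.
    under eq_bigr => i _ do rewrite (ltn_eqF (ltn_ord i)).
    by rewrite mulrAC mulrA.
  rewrite IH; last by move=> s; apply: mulr_ge0 => //; exact: f0.
  by congr (_%:E); apply: eq_bigr => s _; rewrite mulrAC.
under eq_integral do rewrite -sumEFin.
rewrite ge0_integral_sum //; last first.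
  - move=> s t At; rewrite lee_fin mulr_ge0 ?f0 // mulr_ge0 //.
    exact: prodr_ge0.
  - move=> s; apply/measurable_EFinP; apply: measurable_funM => //.
    exact: mf.
rewrite -sumEFin; apply: eq_bigr => s _.
under eq_integral do rewrite EFinM.
rewrite ge0_integralZl_EFin //; try (by apply/measurable_EFinP; exact: mf); try (by move=> t At; rewrite lee_fin f0); try (by rewrite mulr_ge0 // prodr_ge0).
by rewrite fv -EFinM big_ord_recr /= mulrA.
Qed.
Lemma int_amo (A : set R) (mA : measurable A) (a : R) (m : nat)
  (e : nat -> bool) (g : nat -> R -> R) (u : nat -> R) :
  mu A = a%:E -> 0 < a ->
  (forall i1 i2, (i1 < m)%N -> (i2 < m)%N -> e i1 -> e i2 -> i1 = i2) ->
  (forall i, (i < m)%N -> e i -> (\int[mu]_(t in A) (g i t)%:E = (u i)%:E)%E) ->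
  (\int[mu]_(t in A) (\prod_(i < m) (if e i then g i t else 1))%:E =
    (a * \prod_(i < m) (if e i then u i / a else 1))%:E)%E.
Proof.
move=> muA a0 uniq gu.
case: (pickP (fun i : 'I_m => e i)) => [i0 ei0 | none].
  have oth (F : nat -> R) : \prod_(i < m) (if e i then F i else 1) = F i0.
    rewrite (bigD1 i0) //= ei0 big1 ?mulr1 // => j ji0.
    case ej: (e j) => //; exfalso; move/negP: ji0; apply.
    by apply/eqP/val_inj; apply: uniq; rewrite ?ltn_ord ?ej.
  rewrite (_ : (fun t => _) = (fun t => (g i0 t)%:E)); last first.
    by apply/funext => t; rewrite (oth (g^~ t)).
  by rewrite gu // (oth (fun i => u i / a)) mulrC divfK // gt_eqF.
have oth (F : nat -> R) : \prod_(i < m) (if e i then F i else 1) = 1.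
  by rewrite big1 // => i _; rewrite none.
rewrite (_ : (fun t => _) = (fun t => (cst 1%R t)%:E)); last first.
  by apply/funext => t; rewrite (oth (g^~ t)).
rewrite (_ : (fun t => (cst 1%R t)%:E) = cst 1%E) //.
rewrite integral_cst //.
by rewrite -[X in (1 * X)%E]/(mu A) muA mul1e (oth (fun i => u i / a)) mulr1.
Qed.
Lemma amgm (p : nat) (T : 'I_p -> R) : (0 < p)%N -> (forall s, 0 <= T s) ->
  \prod_s T s <= (\sum_s T s ^+ p) / p%:R.
Proof.
move=> p0 T0.
have := (leif_AGM (A := predT) (E := fun s => T s ^+ p) _).1.
rewrite cardT size_enum_ord prodrXl ler_pXn2r //.
- by apply; move=> s _; exact: exprn_ge0.
- by rewrite qualifE /= prodr_ge0.
- by rewrite qualifE /= divr_ge0 // sumr_ge0 // => s _; exact: exprn_ge0.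
Qed.

Lemma amgm_w (p : nat) (T c : 'I_p -> R) : (0 < p)%N -> (forall s, 0 <= T s) ->
  (forall s, 0 < c s) ->
  \prod_s T s <= (\prod_s c s) * ((\sum_s (T s / c s) ^+ p) / p%:R).
Proof.
move=> p0 T0 c0.
have -> : \prod_s T s = \prod_s c s * \prod_s (T s / c s).
  rewrite -big_split /=; apply: eq_bigr => s _.
  by rewrite mulrC divfK // gt_eqF.
rewrite ler_wpM2l //; first by apply: prodr_ge0 => s _; exact: ltW.
apply: amgm => // s; exact: divr_ge0 (T0 s) (ltW (c0 s)).
Qed.

Lemma prod_shift (I : Type) (r : seq I) (b : I -> R) d :
  (forall i, 0 <= b i) -> 0 <= d -> d <= 1 ->
  \prod_(i <- r) (b i + d) <= \prod_(i <- r) b i + d * \prod_(i <- r) (2 * (b i + 1)).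
Proof.
move=> b0 d0 d1; elim: r => [|x r IH]; first by rewrite !big_nil mulr1 lerDl.
rewrite !big_cons.
set Q := \prod_(i <- r) b i; set D := \prod_(i <- r) (2 * (b i + 1)).
set P := \prod_(i <- r) (b i + d).
have Q0 : 0 <= Q by apply: prodr_ge0.
have QD : Q <= D.
  apply: ler_prod => i _; rewrite b0 /=; have := b0 i; lra.
have P0 : 0 <= P by apply: prodr_ge0 => i _; have := b0 i; lra.
have bx := b0 x.
apply: (le_trans (y := (b x + d) * (Q + d * D))).
  by rewrite ler_wpM2l //; lra.
have D0 : 0 <= D by apply: le_trans QD.
have h1 : d * Q <= d * D by rewrite ler_wpM2l.
have h2 : d * (d * D) <= 1 * (d * D) by rewrite ler_wpM2r // mulr_ge0.
have h3 : 0 <= b x * (d * D) by rewrite !mulr_ge0.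
nra.
Qed.

Lemma close_lim (p : nat) (b : 'I_p -> R) L : (forall s, 0 <= b s) ->
  (forall d, 0 < d -> d <= 1 -> L <= \prod_s (b s + d)) -> L <= \prod_s b s.
Proof.
move=> b0 H; apply/ler_addgt0Pr => e e0.
set D := \prod_s (2 * (b s + 1)).
have D0 : 0 < D by apply: prodr_gt0 => s _; have := b0 s; lra.
pose d := Num.min 1 (e / D).
have d0 : 0 < d by rewrite lt_min ltr01 divr_gt0.
have d1 : d <= 1 by rewrite ge_min lexx.
have dD : d * D <= e by rewrite -ler_pdivlMr // ge_min lexx orbT.
apply: (le_trans (H d d0 d1)).
have h := @prod_shift 'I_p (index_enum 'I_p) b d b0 (ltW d0) d1.
apply: (le_trans h).
by rewrite lerD2l.
Qed.
Lemma dyadic_facts (k l : int) :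
  measurable (@dyadic_interval R k l) /\
  mu (@dyadic_interval R k l) = (2%:R ^ l : R)%:E /\ 0 < (2%:R ^ l : R).
Proof.
have h0 : 0 < (2%:R ^ l : R) by apply: exprz_gt0.
have -> : @dyadic_interval R k l =
   [set` Interval (BLeft (k%:~R * 2%:R ^ l)) (BLeft ((k + 1)%:~R * 2%:R ^ l))].
  by apply/funext => x /=; rewrite /dyadic_interval in_itv /=.
split; first exact: measurable_itv.
split=> //; rewrite lebesgue_measure_itv /= lte_fin.
have -> : ((k + 1)%:~R * 2%:R ^ l : R) = k%:~R * 2%:R ^ l + 2%:R ^ l.
  by rewrite intrD mulrDl mul1r.
rewrite ltrDl h0 /=; congr (_%:E); rewrite addrAC subrr add0r //.
Qed.
End Lib.
Lemma e_inj (p s i1 i2 : nat) : (i1 < p)%N -> (i2 < p)%N ->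
  ((i1 + s) %% p = (i2 + s) %% p)%N -> i1 = i2.
Proof.
move=> i1p i2p H.
have : (i1 == i2 %[mod p])%N by rewrite -(eqn_modDr s) H.
by rewrite !modn_small // => /eqP.
Qed.

Lemma e_inj_s (p s1 s2 i : nat) : (s1 < p)%N -> (s2 < p)%N ->
  ((i + s1) %% p = (i + s2) %% p)%N -> s1 = s2.
Proof.
move=> s1p s2p H.
have : (s1 == s2 %[mod p])%N by rewrite -(eqn_modDl i) H.
by rewrite !modn_small // => /eqP.
Qed.

Lemma e_prod_s (R : comRingType) (p i j : nat) (a : R) : (i < p)%N -> (j < p)%N ->
  \prod_(s < p) (if ((i + s) %% p == j)%N then a else 1) = a.
Proof.
move=> ip jp.
have p0 : (0 < p)%N by apply: leq_ltn_trans ip.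
pose s0 : 'I_p := Ordinal (ltn_pmod (j + (p - i)) p0).
have es0 : ((i + s0) %% p == j)%N.
  change (nat_of_ord s0) with ((j + (p - i)) %% p)%N.
  rewrite modnDmr addnCA subnKC; last exact: ltnW.
  by rewrite modnDr modn_small.
rewrite (bigD1 s0); last done.
rewrite es0 big1; first exact: mulr1.
move=> s /andP[_ ss0].
case: eqP => H; last done.
exfalso; move/negP: ss0; apply; apply/eqP/val_inj.
apply: (@e_inj_s p s s0 i (ltn_ord s) (ltn_ord s0)).
by rewrite H (eqP es0).
Qed.
Section Core.
Variable R : realType.
Local Notation mu := (@lebesgue_measure R).

Lemma int_zero_out d (T : measurableType d) (nu : {measure set T -> \bar R})
  (A : set T) (f : T -> \bar R) :
  (forall t, ~ A t -> f t = 0%E) ->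
  (\int[nu]_(t in A) f t = \int[nu]_t f t)%E.
Proof.
move=> H; rewrite integral_mkcond; apply: eq_integral => t _.
rewrite /patch; case: ifPn => // /negP; rewrite inE => nA.
by rewrite H.
Qed.

Variables (I J : set R) (h M : R) (m n p : nat) (Gn : nat -> nat -> R -> R -> R).
Hypotheses (mI : measurable I) (mJ : measurable J) (muI : mu I = h%:E)
  (muJ : mu J = h%:E) (h0 : 0 < h) (p0 : (0 < p)%N) (mp : (m <= p)%N) (np : (n <= p)%N)
  (G0 : forall i j x y, 0 <= Gn i j x y) (GM : forall i j x y, Gn i j x y <= M)
  (GI : forall i j x y, ~ I x -> Gn i j x y = 0)
  (GJ : forall i j x y, ~ J y -> Gn i j x y = 0)
  (mG : forall i j, measurable_fun setT (fun z : R * R => Gn i j z.1 z.2)).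

Definition Gp i j x y := Gn i j x y ^+ p.

Lemma M0 : 0 <= M.
Proof. exact: le_trans (G0 0 0 0 0) (GM 0 0 0 0). Qed.

Lemma Gp0 i j x y : 0 <= Gp i j x y.
Proof. exact: exprn_ge0. Qed.

Lemma GpM i j x y : Gp i j x y <= M ^+ p.
Proof. by rewrite /Gp lerXn2r // ?nnegrE ?G0 ?M0. Qed.

Lemma GpI i j x y : ~ I x -> Gp i j x y = 0.
Proof. by move=> nx; rewrite /Gp GI // expr0n gtn_eqF. Qed.

Lemma GpJ i j x y : ~ J y -> Gp i j x y = 0.
Proof. by move=> ny; rewrite /Gp GJ // expr0n gtn_eqF. Qed.

Lemma mGp i j : measurable_fun setT (fun z : R * R => Gp i j z.1 z.2).
Proof. exact: measurable_funX. Qed.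

Lemma mGp_sec i j x : measurable_fun setT (fun y => Gp i j x y).
Proof. exact: (measurable_fun_pair2 (f := fun z : R * R => Gp i j z.1 z.2) x (mGp i j)). Qed.

Definition Psi i j x := (\int[mu]_(y in J) (Gp i j x y)%:E)%E.

Lemma Psi_T i j x : Psi i j x = (\int[mu]_y (Gp i j x y)%:E)%E.
Proof. by apply: int_zero_out => y ny; rewrite GpJ. Qed.

Lemma Psi_bnd i j x : (0 <= Psi i j x)%E /\ (Psi i j x <= (M ^+ p * h)%:E)%E.
Proof.
split; first by apply: integral_ge0 => y _; rewrite lee_fin Gp0.
apply: (le_trans (@le_int_ge0 _ J _ (fun _ => (M ^+ p)%:E) _ _)).
- by move=> y _; rewrite lee_fin Gp0.
- by move=> y _; rewrite lee_fin GpM.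
rewrite (_ : (fun _ => _) = cst (M ^+ p)%:E) // integral_cst //.
by rewrite -[X in (_ * X)%E]/(mu J) muJ.
Qed.

Lemma Psi_fin i j x : Psi i j x \is a fin_num.
Proof.
have [P0 PM] := Psi_bnd i j x.
by rewrite ge0_fin_numE // (le_lt_trans PM) // ltry.
Qed.

Definition psi i j x := fine (Psi i j x).

Lemma psiE i j x : (psi i j x)%:E = Psi i j x.
Proof. by rewrite fineK // Psi_fin. Qed.

Lemma psi0 i j x : 0 <= psi i j x.
Proof. by rewrite -lee_fin psiE; case: (Psi_bnd i j x). Qed.

Lemma psiM i j x : psi i j x <= M ^+ p * h.
Proof. by rewrite -lee_fin psiE; case: (Psi_bnd i j x). Qed.

Lemma psiI i j x : ~ I x -> psi i j x = 0.
Proof.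
move=> nx; rewrite /psi Psi_T.
rewrite (_ : (fun y => _) = cst 0%E) ?integral0 //.
by apply/funext => y; rewrite GpI.
Qed.

Lemma mGpE i j : measurable_fun setT (fun z : R * R => (Gp i j z.1 z.2)%:E).
Proof. by apply/measurable_EFinP; exact: mGp. Qed.

Lemma mpsi i j : measurable_fun setT (psi i j).
Proof.
have mF := @measurable_fun_fubini_tonelli_F _ _ (measurableTypeR R) (measurableTypeR R) R mu
  (fun z : R * R => (Gp i j z.1 z.2)%:E) (mGpE i j).
have mF' := mF (fun z => Gp0 _ _ _ _).
have := measurableT_comp (fine_measurable measurableT) mF'.
by apply: eq_measurable_fun => x _; rewrite /psi Psi_T.
Qed.
Definition Q i j := (\int[(mu \x mu)]_z (Gp i j z.1 z.2)%:E)%E.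

Lemma QE i j : Q i j = (\int[mu]_(x in I) (psi i j x)%:E)%E.
Proof.
rewrite /Q (@fubini_tonelli1 _ _ (measurableTypeR R) (measurableTypeR R) R mu mu _ (mGpE i j) (fun z => Gp0 _ _ _ _)).
rewrite [RHS]int_zero_out; last by move=> x nx; rewrite psiI.
by apply: eq_integral => x _; rewrite psiE Psi_T /fubini_F.
Qed.

Lemma Q_bnd i j : (0 <= Q i j)%E /\ (Q i j <= (M ^+ p * h * h)%:E)%E.
Proof.
rewrite QE; split; first by apply: integral_ge0 => x _; rewrite lee_fin psi0.
apply: (le_trans (@le_int_ge0 _ I _ (fun _ => (M ^+ p * h)%:E) _ _)).
- by move=> x _; rewrite lee_fin psi0.
- by move=> x _; rewrite lee_fin psiM.
rewrite (_ : (fun _ => _) = cst (M ^+ p * h)%:E) // integral_cst //.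
by rewrite -[X in (_ * X)%E]/(mu I) muI.
Qed.

Lemma Q_fin i j : Q i j \is a fin_num.
Proof.
have [P0 PM] := Q_bnd i j.
by rewrite ge0_fin_numE // (le_lt_trans PM) // ltry.
Qed.

Definition q i j := fine (Q i j).

Lemma qE i j : (q i j)%:E = Q i j.
Proof. by rewrite fineK // Q_fin. Qed.

Lemma q0 i j : 0 <= q i j.
Proof. by rewrite -lee_fin qE; case: (Q_bnd i j). Qed.

Lemma int_psi i j : (\int[mu]_(x in I) (psi i j x)%:E = (q i j)%:E)%E.
Proof. by rewrite qE QE. Qed.

Definition e (s i j : nat) : bool := ((i + s) %% p == j)%N.

Lemma e_prod (i j : nat) (a : R) : (i < m)%N -> (j < n)%N ->
  \prod_(s < p) (if e s i j then a else 1) = a.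
Proof.
move=> im jn; apply: e_prod_s.
  exact: leq_trans im mp.
exact: leq_trans jn np.
Qed.

Lemma S1 (c : 'I_p -> R) (x y : nat -> R) : (forall s, 0 < c s) ->
  \prod_(i < m) \prod_(j < n) Gn i j (x i) (y j) <=
  \sum_(s < p) ((\prod_t c t) / p%:R / c s ^+ p) *
     \prod_(j < n) \prod_(i < m) (if e s i j then Gp i j (x i) (y j) else 1).
Proof.
move=> c0.
pose T := fun s : 'I_p => \prod_(i < m) \prod_(j < n) (if e s i j then Gn i j (x i) (y j) else 1).
have -> : \prod_(i < m) \prod_(j < n) Gn i j (x i) (y j) = \prod_s T s.
  apply/esym; rewrite /T exchange_big /=; apply: eq_bigr => i _.
  rewrite exchange_big /=; apply: eq_bigr => j _.
  by rewrite e_prod.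
have T0 s : 0 <= T s.
  apply: prodr_ge0 => i _; apply: prodr_ge0 => j _; case: (e s i j) => //.
apply: (le_trans (@amgm_w R p T c p0 T0 c0)).
rewrite mulr_suml mulr_sumr; apply: ler_sum => s _.
rewrite expr_div_n.
have -> : T s ^+ p = \prod_(j < n) \prod_(i < m) (if e s i j then Gp i j (x i) (y j) else 1).
  rewrite /T -prodrXl; under eq_bigr do rewrite -prodrXl.
  rewrite exchange_big /=; apply: eq_bigr => j _; apply: eq_bigr => i _.
  by rewrite /Gp; case: (e s i j) => //; rewrite expr1n.
set P := \prod_(j < n) _.
rewrite le_eqVlt; apply/orP; left; apply/eqP.
ring.
Qed.

Definition chi (s i : nat) (t : R) := \prod_(j < n) (if e s i j then psi i j t / h else 1).

Lemma e_uniq_i (s j i1 i2 : nat) : (i1 < m)%N -> (i2 < m)%N -> e s i1 j -> e s i2 j -> i1 = i2.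
Proof.
move=> i1m i2m /eqP e1 /eqP e2; apply: (@e_inj p s).
- exact: leq_trans i1m mp.
- exact: leq_trans i2m mp.
by rewrite e1 e2.
Qed.

Lemma e_uniq_j (s i j1 j2 : nat) : e s i j1 -> e s i j2 -> j1 = j2.
Proof. by move=> /eqP <- /eqP <-. Qed.

Lemma inner_eq (w : 'I_p -> R) (x : nat -> R) : (forall s, 0 <= w s) ->
  iter_int J n (fun y => (\sum_s w s * \prod_(j < n)
      \prod_(i < m) (if e s i j then Gp i j (x i) (y j) else 1))%:E) =
  (\sum_s (w s * h ^+ n) * \prod_(i < m) chi s i (x i))%:E.
Proof.
move=> w0.
rewrite (@iter_int_sep R J mJ p w
   (fun s j t => \prod_(i < m) (if e s i j then Gp i j (x i) t else 1))
   (fun s j => h * \prod_(i < m) (if e s i j then psi i j (x i) / h else 1)) n w0).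
- congr (_%:E); apply: eq_bigr => s _.
  rewrite prodrMl card_ord mulrA; congr (_ * _).
  rewrite /chi exchange_big /=; done.
- move=> s j; apply: measurable_prod => i _.
  case: (e s i j); last exact: measurable_cst.
  exact: measurable_funS (mGp_sec _ _ _).
- move=> s j t _; apply: prodr_ge0 => i _; case: (e s i j) => //; exact: Gp0.
- move=> s j.
  apply: (@int_amo R J mJ h m (fun i => e s i j) (fun i t => Gp i j (x i) t)
     (fun i => psi i j (x i)) muJ h0).
  + by move=> i1 i2 i1m i2m; apply: e_uniq_i.
  + by move=> i _ _; rewrite psiE.
Qed.

Lemma outer_eq (w : 'I_p -> R) : (forall s, 0 <= w s) ->
  iter_int I m (fun x => (\sum_s w s * \prod_(i < m) chi s i (x i))%:E) =
  (\sum_s (w s * h ^+ m) * \prod_(i < m) \prod_(j < n)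
       (if e s i j then q i j / h / h else 1))%:E.
Proof.
move=> w0.
rewrite (@iter_int_sep R I mI p w chi
   (fun s i => h * \prod_(j < n) (if e s i j then q i j / h / h else 1)) m w0).
- congr (_%:E); apply: eq_bigr => s _.
  by rewrite prodrMl card_ord mulrA.
- move=> s i; apply: measurable_prod => j _.
  case: (e s i j); last exact: measurable_cst.
  apply: measurable_funM; last exact: measurable_cst.
  exact: measurable_funS (mpsi _ _).
- move=> s i t _; apply: prodr_ge0 => j _; case: (e s i j) => //.
  by apply: divr_ge0; [exact: psi0 | exact: ltW].
- move=> s i.
  apply: (@int_amo R I mI h n (fun j => e s i j) (fun j t => psi i j t / h)
     (fun j => q i j / h) muI h0).
  + by move=> j1 j2 _ _; apply: e_uniq_j.
  + move=> j _ _.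
    rewrite (_ : (fun t => (psi i j t / h)%:E) =
                 (fun t => (h^-1)%:E * (psi i j t)%:E)%E); last first.
      by apply/funext => t; rewrite -EFinM mulrC.
    rewrite ge0_integralZl_EFin //.
    * by rewrite int_psi -EFinM mulrC.
    * by move=> t _; rewrite lee_fin psi0.
    * by apply/measurable_EFinP; exact: measurable_funS (mpsi _ _).
    * by rewrite invr_ge0 ltW.
Qed.

Definition LHSe := iter_int I m (fun x => iter_int J n (fun y =>
   (\prod_(i < m) \prod_(j < n) Gn i j (x i) (y j))%:E)).

Definition B (s : nat) := \prod_(i < m) \prod_(j < n) (if e s i j then q i j / h / h else 1).

Lemma chain (c : 'I_p -> R) : (forall s, 0 < c s) ->
  ((h ^+ (m + n))^-1%:E * LHSe <=
    (\sum_s ((\prod_t c t) / p%:R / c s ^+ p) * B s)%:E)%E.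
Proof.
move=> c0.
set w := fun s : 'I_p => (\prod_t c t) / p%:R / c s ^+ p.
have w0 s : 0 <= w s.
  rewrite /w; apply: divr_ge0; last by apply: exprn_ge0; exact: ltW.
  apply: divr_ge0 => //; apply: prodr_ge0 => t _; exact: ltW.
have step : (LHSe <= iter_int I m (fun x =>
    (\sum_s (w s * h ^+ n) * \prod_(i < m) chi s i (x i))%:E))%E.
  apply: iter_int_le => x Hx; split.
    apply: iter_int_ge0 => y _; rewrite lee_fin.
    by apply: prodr_ge0 => i _; apply: prodr_ge0 => j _; exact: G0.
  rewrite -inner_eq //; apply: iter_int_le => y Hy; split.
    by rewrite lee_fin; apply: prodr_ge0 => i _; apply: prodr_ge0 => j _; exact: G0.
  by rewrite lee_fin; exact: S1.
rewrite outer_eq in step; last first.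
  by move=> s; rewrite mulr_ge0 // exprn_ge0 // ltW.
apply: (le_trans (lee_wpmul2l _ step)).
  by rewrite lee_fin invr_ge0 exprn_ge0 // ltW.
rewrite -EFinM lee_fin mulr_sumr le_eqVlt; apply/orP; left; apply/eqP.
apply: eq_bigr => s _; rewrite /B exprD.
have hn0 : h != 0 by rewrite gt_eqF.
set P := \prod_(i < m) _.
have -> : w s * h ^+ n * h ^+ m * P = (h ^+ m * h ^+ n) * (w s * P) by ring.
by rewrite mulKf // mulf_neq0 // expf_neq0.
Qed.

Definition r i j := ((h ^+ 2)^-1 * q i j) `^ (p%:R^-1).

Lemma r0 i j : 0 <= r i j.
Proof. exact: powR_ge0. Qed.

Lemma rp i j : r i j ^+ p = q i j / h / h.
Proof.
rewrite /r -powR_mulrn ?powR_ge0 // -powRrM mulVf ?pnatr_eq0 -?lt0n //.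
rewrite powRr1; last by rewrite mulr_ge0 ?invr_ge0 ?exprn_ge0 ?q0 // ltW.
by rewrite expr2 invfM; ring.
Qed.

Definition b (s : nat) := \prod_(i < m) \prod_(j < n) (if e s i j then r i j else 1).

Lemma b0 s : 0 <= b s.
Proof. by apply: prodr_ge0 => i _; apply: prodr_ge0 => j _; case: (e s i j) => //; exact: r0. Qed.

Lemma bp s : b s ^+ p = B s.
Proof.
rewrite /b /B -prodrXl; apply: eq_bigr => i _; rewrite -prodrXl.
by apply: eq_bigr => j _; case: (e s i j); rewrite ?rp ?expr1n.
Qed.

Lemma prod_b : \prod_(s < p) b s = \prod_(i < m) \prod_(j < n) r i j.
Proof.
rewrite /b exchange_big /=; apply: eq_bigr => i _.
rewrite exchange_big /=; apply: eq_bigr => j _.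
by rewrite e_prod.
Qed.

Lemma chain2 d : 0 < d ->
  ((h ^+ (m + n))^-1%:E * LHSe <= (\prod_(s < p) (b s + d))%:E)%E.
Proof.
move=> d0.
have c0 (s : 'I_p) : 0 < b s + d by rewrite ltr_wpDl // b0.
apply: (le_trans (@chain (fun s : 'I_p => b s + d) c0)); rewrite lee_fin.
set C := \prod_(t < p) (b t + d).
have C0 : 0 <= C by apply: prodr_ge0 => t _; exact: ltW.
have -> : \sum_(s < p) (C / p%:R / (b s + d) ^+ p) * B s =
          C / p%:R * \sum_(s < p) (b s / (b s + d)) ^+ p.
  rewrite mulr_sumr; apply: eq_bigr => s _.
  by rewrite -bp expr_div_n mulrA mulrAC.
have pp : 0 < p%:R :> R by rewrite ltr0n.
apply: (@le_trans _ _ (C / p%:R * \sum_(s < p) 1)).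
  apply: ler_wpM2l; first by rewrite divr_ge0 // ltW.
  apply: ler_sum => s _.
  apply: exprn_ile1; first by rewrite divr_ge0 ?b0 // ltW.
  by rewrite ler_pdivrMr // mul1r lerDl ltW.
by rewrite sumr_const card_ord divfK ?gt_eqF.
Qed.

Lemma core_final :
  ((h ^+ (m + n))^-1%:E * LHSe <=
    (\prod_(i < m) \prod_(j < n) r i j)%:E)%E.
Proof.
set X := ((h ^+ (m + n))^-1%:E * LHSe)%E.
have X0 : (0 <= X)%E.
  apply: mule_ge0; first by rewrite lee_fin invr_ge0 exprn_ge0 // ltW.
  apply: iter_int_ge0 => x _; apply: iter_int_ge0 => y _; rewrite lee_fin.
  by apply: prodr_ge0 => i _; apply: prodr_ge0 => j _; exact: G0.
have Xfin : X \is a fin_num.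
  by rewrite ge0_fin_numE // (le_lt_trans (@chain2 1 ltr01)) // ltry.
rewrite -(fineK Xfin) lee_fin -prod_b.
apply: (@close_lim R p (fun s => b s) (fine X)); first by move=> s; exact: b0.
by move=> d d0 _; rewrite -lee_fin fineK //; exact: chain2.
Qed.

End Core.

Theorem lemma2 (R : realType) (k1 k2 l : int) (m n : nat)
  (G : 'I_m -> 'I_n -> R -> R -> R) :
  let I := @dyadic_interval R k1 l in
  let J := @dyadic_interval R k2 l in
  let h : R := 2%:R ^ l in
  let p : nat := maxn m n in
  (forall i j, forall x y, I x -> J y -> 0 <= G i j x y) ->
  (forall i j, exists M : R, forall x y, I x -> J y -> G i j x y <= M) ->
  (forall i j, measurable_fun (I `*` J) (fun z : R * R => G i j z.1 z.2)) ->
  ((h ^+ (m + n))^-1%:E *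
     iter_int I m (fun x => iter_int J n (fun y =>
       \prod_(i < m) \prod_(j < n) (G i j (x i) (y j))%:E))
   <= \prod_(i < m) \prod_(j < n)
        (((h ^+ 2)^-1)%:E *
          \int[(@lebesgue_measure R \x @lebesgue_measure R)]_(z in I `*` J)
             ((G i j z.1 z.2) ^+ p)%:E) `^ (p%:R^-1))%E.
Proof.
move=> I J h p G0 GM mG.
have [mI [muI h0]] := @dyadic_facts R k1 l.
have [mJ [muJ _]] := @dyadic_facts R k2 l.
rewrite -/I in mI muI; rewrite -/J in mJ muJ; rewrite -/h in muI muJ h0.
have [p0|pp] := posnP p.
  have : (maxn m n <= 0)%N by rewrite -/p p0.
  rewrite geq_max !leqn0 => /andP[/eqP m0 /eqP n0].
  subst m n => /=.
  by rewrite !big_ord0 expr0 invr1 mul1e.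
have /choice [Mf HM] : forall ij : 'I_m * 'I_n, exists M : R,
    forall x y, I x -> J y -> G ij.1 ij.2 x y <= M by move=> [i j]; exact: GM.
set M := \sum_(ij : 'I_m * 'I_n) `|Mf ij|.
have M0 : 0 <= M by apply: sumr_ge0.
have HMM i j x y : I x -> J y -> G i j x y <= M.
  move=> Ix Jy; apply: le_trans (HM (i, j) x y Ix Jy) _.
  apply: le_trans (ler_norm _) _.
  by rewrite /M (bigD1 (i, j)) //= lerDl sumr_ge0.
pose Gn (i j : nat) (x y : R) : R :=
  if (insub i : option 'I_m) is Some i' then
    if (insub j : option 'I_n) is Some j' then
      if (x \in I) && (y \in J) then G i' j' x y else 0
    else 0
  else 0.
have GnE (i : 'I_m) (j : 'I_n) x y : I x -> J y -> Gn i j x y = G i j x y.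
  by move=> Ix Jy; rewrite /Gn !valK (mem_set Ix) (mem_set Jy).
have Gn0 i j x y : 0 <= Gn i j x y.
  rewrite /Gn; case: (insub i) => [i'|] //; case: (insub j) => [j'|] //.
  by case: ifP => // /andP[/set_mem Ix /set_mem Jy]; exact: G0.
have GnM i j x y : Gn i j x y <= M.
  rewrite /Gn; case: (insub i) => [i'|] //; case: (insub j) => [j'|] //.
  by case: ifP => // /andP[/set_mem Ix /set_mem Jy]; exact: HMM.
have GnI i j x y : ~ I x -> Gn i j x y = 0.
  move=> nx; rewrite /Gn; case: (insub i) => [i'|] //; case: (insub j) => [j'|] //.
  by case: ifP => // /andP[/set_mem Ix _]; case: (nx Ix).
have GnJ i j x y : ~ J y -> Gn i j x y = 0.
  move=> ny; rewrite /Gn; case: (insub i) => [i'|] //; case: (insub j) => [j'|] //.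
  by case: ifP => // /andP[_ /set_mem Jy]; case: (ny Jy).
have mIJ : measurable (I `*` J) by exact: measurableX.
have mGn i j : measurable_fun setT (fun z : R * R => Gn i j z.1 z.2).
  rewrite /Gn; case: (insub i) => [i'|]; last exact: measurable_cst.
  case: (insub j) => [j'|]; last exact: measurable_cst.
  have := (measurable_restrictT (fun z : R * R => G i' j' z.1 z.2) mIJ).1 (mG i' j').
  by apply: eq_measurable_fun => z _; rewrite /patch in_setX.
have := @core_final R I J h M m n p Gn mI mJ muI muJ h0 pp (leq_maxl m n)
  (leq_maxr m n) Gn0 GnM GnI GnJ mGn.
have eqL : LHSe R I J m n Gn = iter_int I m (fun x => iter_int J n (fun y =>
       (\prod_(i < m) \prod_(j < n) (G i j (x i) (y j))%:E)%E)).
  apply: iter_int_eq => x Hx; apply: iter_int_eq => y Hy.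
  rewrite -prodEFin; apply: eq_bigr => i _; rewrite -prodEFin; apply: eq_bigr => j _.
  by rewrite GnE //; [exact: Hx | exact: Hy].
have eqR : (\prod_(i < m) \prod_(j < n) r R h p Gn i j)%:E =
    (\prod_(i < m) \prod_(j < n)
        (((h ^+ 2)^-1)%:E *
          \int[(@lebesgue_measure R \x @lebesgue_measure R)]_(z in I `*` J)
             ((G i j z.1 z.2) ^+ p)%:E) `^ (p%:R^-1))%E.
  rewrite -prodEFin; apply: eq_bigr => i _; rewrite -prodEFin; apply: eq_bigr => j _.
  have -> : (\int[(@lebesgue_measure R \x @lebesgue_measure R)]_(z in I `*` J)
             ((G i j z.1 z.2) ^+ p)%:E = Q R p Gn i j)%E.
    transitivity (\int[(@lebesgue_measure R \x @lebesgue_measure R)]_(z in I `*` J)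
             (Gp R p Gn i j z.1 z.2)%:E)%E.
      by apply: eq_integral => z; rewrite inE => -[Iz Jz]; rewrite /Gp (GnE i j).
    rewrite /Q int_zero_out // => z nz; rewrite /Gp.
    have [Iz|nIz] := pselect (I z.1); last by rewrite GnI // expr0n gtn_eqF.
    have [Jz|nJz] := pselect (J z.2); last by rewrite GnJ // expr0n gtn_eqF.
    by case: nz.
  by rewrite -(@qE R I J h M p Gn mI mJ muI muJ pp Gn0 GnM GnI GnJ mGn i j) -EFinM poweR_EFin.
by rewrite eqL eqR.
Qed.
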